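(* Let $n\ge 1$ and let $f_1,\dots,f_n\in\mathcal{B}_c$. Let $X=(X_1,\dots,X_n)$ be a random vector in $\mathbb{R}^n$ (the $X_i$ possibly dependent) such that $P(|X_i|\ge u)\le f_i(u)$ for all $u\ge 0$ and all $i$. Let $g:\mathbb{R}^n\to\mathbb{R}$ be continuous and $t\in\mathbb{R}$. Suppose there exists $s_t\in(0,1]$ such that $$L(s_t)\in \partial_{SW}\, Q\big(g^{-1}[t,\infty)\big).$$ Then $P(g(X)\ge t)\le n\,s_t$.
   Context: $\mathcal{B}_c$ is the set of functions $f:[0,\infty)\to(0,\infty)$ that are continuous, strictly decreasing, satisfy $f(0)\ge 1$ and $\lim_{u\to\infty}f(u)=0$. For such $f_i$, $L(s)=(f_1^{-1}(s),\dots,f_n^{-1}(s))\in[0,\infty)^n$ for $s\in(0,1]$. $Q:\mathbb{R}^n\to[0,\infty)^n$ is $Q(x_1,\dots,x_n)=(|x_1|,\dots,|x_n|)$. For $x,y\in[0,\infty)^n$, write $x\le' y$ iff $x_i\le y_i$ for all $i$, and $x<'y$ iff $x\le' y$ and $x\ne y$. For a nonempty closed $V\subset[0,\infty)^n$, the southwest boundary is $\partial_{SW}V=\{x\in V:\ \text{there is no } x'\in V \text{ with } x'<'x\}$, i.e. the set of minimal elements of $V$. *)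

(* Defs.v *)
From HB Require Import structures.
From mathcomp Require Import all_boot all_order all_algebra.
From mathcomp Require Import all_classical all_reals all_analysis.
Set Implicit Arguments. Unset Strict Implicit. Unset Printing Implicit Defensive.
Import Order.TTheory GRing.Theory Num.Theory.
Import numFieldNormedType.Exports.
Local Open Scope classical_set_scope.
Local Open Scope ring_scope.

(* The class B_c: f : [0,oo) -> (0,oo) continuous, strictly decreasing,
   f 0 >= 1, f u -> 0 as u -> +oo.  Functions are given on R but only
   their restriction to [0,oo) matters. *)
Definition in_Bc {R : realType} (f : R -> R) : Prop :=
  [/\ {within `[0, +oo[, continuous f},
      (forall u, 0 <= u -> 0 < f u),
      (forall u v, 0 <= u -> u < v -> f v < f u),
      1 <= f 0 &
      f @ +oo --> 0].

(* f^{-1}(s): the (unique, for f in B_c and s in (0,1]) u >= 0 with f u = s. *)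
Definition finv {R : realType} (f : R -> R) (s : R) : R :=
  xget 0 [set u | 0 <= u /\ f u = s].

Definition Lvec {R : realType} {n : nat} (f : 'I_n -> R -> R) (s : R) : 'rV[R]_n :=
  \row_i finv (f i) s.

Definition Qabs {R : realType} {n : nat} (x : 'rV[R]_n) : 'rV[R]_n :=
  \row_i `|x 0 i|.

Definition lev {R : realType} {n : nat} (x y : 'rV[R]_n) : Prop :=
  forall i, x 0 i <= y 0 i.

Definition SW {R : realType} {n : nat} (V : set 'rV[R]_n) : set 'rV[R]_n :=
  [set x | V x /\ ~ (exists x', V x' /\ lev x' x /\ x' <> x)].

(* Main.v *)
Require Import Defs.
From HB Require Import structures.
From mathcomp Require Import all_boot all_order all_algebra.
From mathcomp Require Import all_classical all_reals all_analysis.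
From mathcomp Require Import lra.
Import Order.TTheory GRing.Theory Num.Theory.
Import numFieldNormedType.Exports.
Local Open Scope classical_set_scope.
Local Open Scope ring_scope.

Lemma finv_spec {R : realType} (f : R -> R) s : in_Bc f -> 0 < s -> s <= 1 ->
  0 <= Defs.finv f s /\ f (Defs.finv f s) = s.
Proof.
move=> [fc fpos fdec f01 finf] s0 s1.
suff H : exists u, [set u | 0 <= u /\ f u = s] u by exact: (xgetPex 0 H).
have [u [u0 fu]] : exists u, 0 <= u /\ f u < s.
  have H1 : \forall x \near +oo, f x < s by exact: (cvgr_lt _ finf).
  have H2 := nbhs_pinfty_ge (num_real (0:R)).
  have [x [fx x0]] := filter_ex (filterI H1 H2).
  by exists x.
have : {within `[0, u], continuous f}.
  apply: (continuous_subspaceW _ fc).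
  by move=> x /=; rewrite !in_itv /= andbT => /andP[].
move/(IVT u0) => /(_ s).
case.
  by rewrite ge_min le_max (ltW fu) orbT (le_trans s1 f01).
move=> c; rewrite in_itv /= => /andP[c0 _] fc_eq.
by exists c.
Qed.

Section Meas.
Context {R : realType} (d : measure_display) (T : measurableType d).

Lemma mpre_lt (h : {mfun T >-> R}) a b :
  measurable [set w | a < h w < b].
Proof.
have := measurable_funPTI h (measurable_itv `]a, b[).
congr measurable; apply/seteqP; split => w /=; by rewrite in_itv.
Qed.

Lemma mpre_absge (h : {mfun T >-> R}) c : 0 <= c ->
  measurable [set w | c <= `|h w|].
Proof.
move=> c0.
have := measurable_funPTI h (measurableU _ _ (measurable_itv `]-oo, - c]) (measurable_itv `[c, +oo[)).
congr measurable; apply/seteqP; split => w /=; rewrite !in_itv /= andbT.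
- case=> H; last by rewrite (le_trans H) // ler_norm.
  by rewrite -normrN (le_trans _ (ler_norm _)) // lerNr.
- move=> H; case: (lerP 0 (h w)) => hw.
    by right; rewrite -(ger0_norm hw).
  by left; rewrite lerNr -(ltr0_norm hw).
Qed.
End Meas.

Theorem theorem1 (R : realType) (d : measure_display) (T : measurableType d)
  (P : probability T R) (n : nat) (hn : (0 < n)%N)
  (f : 'I_n -> R -> R) (hf : forall i, in_Bc (f i))
  (X : 'I_n -> {RV P >-> R})
  (htail : forall i (u : R), 0 <= u ->
     (P [set w | (u <= `|X i w|)%R] <= (f i u)%:E)%E)
  (g : 'rV[R]_n -> R) (hg : continuous g) (t : R)
  (st : R) (hst0 : 0 < st) (hst1 : st <= 1)
  (hSW : SW (Qabs @` [set x | t <= g x]) (Lvec f st)) :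
  (P [set w | (t <= g (\row_i X i w))%R] <= (n%:R * st)%:E)%E.
Proof.
set l := Lvec f st.
have hl i : 0 <= l 0 i /\ f i (l 0 i) = st.
  by rewrite /l /Lvec mxE; apply: finv_spec.
set A := [set w | (t <= g (\row_i X i w))%R].
set Bs := fun i : 'I_n => [set w | l 0 i <= `|X i w|].
set Bn := fun k : nat => if insub k is Some i then Bs i else set0.
have BnE (i : 'I_n) : Bn i = Bs i by rewrite /Bn valK.
have mBs i : measurable (Bs i) by apply: mpre_absge; case: (hl i).
have mA : measurable A.
  set good := fun p : 'rV[rat]_n * rat => (0 : R) < ratr p.2 /\
    forall y : 'rV[R]_n, (forall i, `|y 0 i - ratr (p.1 0 i)| < ratr p.2) -> g y < t.
  set Box := fun p : 'rV[rat]_n * rat => \bigcap_(i in setT)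
     [set w | ratr (p.1 0 i) - ratr p.2 < X i w < ratr (p.1 0 i) + ratr p.2].
  set Fb := fun p => [set w | good p /\ Box p w].
  have -> : A = ~` \bigcup_p Fb p.
    apply/seteqP; split => w /=.
    - move=> Aw [p _ [[_ Hg] Bw]].
      have : g (\row_i X i w) < t by apply: Hg => i; rewrite mxE ltr_distl; exact: Bw.
      by rewrite ltNge Aw.
    - move=> nA; rewrite /A /=; apply: contrapT => Hlt.
      have gY : g (\row_i X i w) < t by rewrite ltNge; apply/negP.
      set Y := \row_i X i w in gY.
      have H : \forall y \near Y, g y < t by exact: (cvgr_lt _ (hg Y)).
      move/nbhs_ballP: H => [e e0 He].
      have [r] : exists r : rat, ratr r \in `]0 : R, e/2[ by apply: rat_in_itvoo; move: e0; rewrite /=; lra.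
      rewrite in_itv /= => /andP[r0 re].
      have : forall i, exists q : rat, ratr q \in `]Y 0 i - ratr r, Y 0 i + ratr r[.
        by move=> i; apply: rat_in_itvoo; lra.
      move/choice => [qf Hq].
      apply: nA; exists (\row_i qf i, r) => //.
      split; last first.
        move=> i _ /=; rewrite mxE.
        move: (Hq i); rewrite in_itv /= /Y mxE => /andP[h1 h2].
        apply/andP; split; lra.
      split => // y Hy; apply: He.
      split => // i j; rewrite (ord1 i).
      rewrite -ball_normE /ball_ /=.
      move: (Hy j) (Hq j); rewrite /= mxE ltr_distl in_itv /= => /andP[h1 h2] /andP[h3 h4].
      rewrite ltr_distl; apply/andP; split; lra.
  apply: measurableC; apply: countable_bigcupT_measurable; first exact: countableP.
  move=> p; have [gp|ngp] := pselect (good p); last first.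
    by rewrite (_ : Fb p = set0) //; apply/seteqP; split => w // [].
  rewrite (_ : Fb p = Box p); last by apply/seteqP; split => w // [].
  apply: fin_bigcap_measurable; first exact: finite_finset.
  by move=> i _; exact: mpre_lt.
have sub : A `<=` \big[setU/set0]_(i < n) Bn i.
  move=> w Aw; rewrite -bigcup_mkord.
  apply: contrapT => Hn.
  have Hlt i : `|X i w| < l 0 i.
    rewrite ltNge; apply/negP => H; apply: Hn; exists (val i) => //=.
    by rewrite BnE.
  case: hSW => _; apply; exists (Qabs (\row_i X i w)); split.
    by exists (\row_i X i w).
  split.
    by move=> i; rewrite /Qabs mxE mxE ltW.
  move=> /matrixP /(_ 0 (Ordinal hn)); rewrite /Qabs !mxE => E.
  by have := Hlt (Ordinal hn); rewrite E /l /Lvec mxE ltxx.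
apply: (le_trans (le_measure _ _ _ sub)).
- by rewrite inE.
- by rewrite inE; apply: bigsetU_measurable => i _; rewrite BnE.
apply: le_trans; first apply: (Boole_inequality P (A:=Bn) (n:=n)).
  by move=> i ilt; rewrite /Bn insubT.
apply: (@le_trans _ _ (\sum_(i < n) st%:E)%E).
  apply: lee_sum => i _; rewrite BnE.
  case: (hl i) => h0 h1; rewrite -h1; exact: htail.
by rewrite sumEFin sumr_const card_ord mulr_natl.
Qed.
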